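(* (i) The sequence $D_{2,1}=0$, $D_{2,m}=A_{2,m}-A_{2,m-1}$ ($m\geq2$) satisfies, for $m\geq 2$, $$D_{2,m}=\frac{m(2m-1)(2m+\lambda)}{(m-1+\lambda)(2m-2+\lambda)(2m-1+2\lambda)}D_{2,m-1}+\frac{2(m-1)m^2(m-1+\lambda)(m+\lambda)(2m-1+\lambda)(2m+\lambda)}{(2\lambda+1)(2m-1+2\lambda)},$$ and the solution of this recurrence with $D_{2,1}=0$ is $$D_{2,m}=\frac{2(m-1)m(m+\lambda)(m+\lambda+1)(2m+\lambda)\big[m^2+\lambda m-\frac{2}{2\lambda+3}\big]}{(2\lambda+1)(2\lambda+5)}.$$ (ii) The sequence $\widetilde D_{2,1}=0$, $\widetilde D_{2,m}=\widetilde A_{2,m}-\widetilde A_{2,m-1}$ ($m\geq2$) satisfies, for $m\geq2$, $$\widetilde D_{2,m}=\frac{(m-1)(2m-1)(2m-1+\lambda)}{(m-1+\lambda)(2m-3+\lambda)(2m-3+2\lambda)}\widetilde D_{2,m-1}+\frac{(m-1)(2m-1)(2m-2+\lambda)(2m-1+\lambda)\big[m^2+(\lambda-2)m-\lambda+\frac12\big]}{2(2\lambda+1)},$$ and the solution of this recurrence with $\widetilde D_{2,1}=0$ is $$\widetilde D_{2,m}=\frac{(m-1)(2m-1)(m+\lambda)(2m-1+\lambda)(2m-1+2\lambda)\big[m^2+(\lambda-1)m-\frac{2\lambda+1}{2}-\frac{2}{2\lambda+3}\big]}{2(2\lambda+1)(2\lambda+5)}.$$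
   Context: Fix $\lambda>-1/2$. Define polynomials $Q_m$ by $Q_0=1$, $Q_1(\mu)=1-\frac{2(\lambda+1)(\lambda+2)}{2\lambda+1}\mu$ and, for $m\geq2$, $$Q_m-Q_{m-1}=\frac{m(2m-1)(2m+\lambda)}{(m-1+\lambda)(2m-2+\lambda)(2m-1+2\lambda)}\big[Q_{m-1}-Q_{m-2}\big]-\frac{2m(2m-1+\lambda)(2m+\lambda)}{2m-1+2\lambda}\,\mu\,Q_{m-1}(\mu).$$ Define $\widetilde Q_m$ by $\widetilde Q_0=1$, $\widetilde Q_1(\mu)=1-\frac{\lambda+1}{2}\mu$ and, for $m\geq2$, $$\widetilde Q_m-\widetilde Q_{m-1}=\frac{(m-1)(2m-1)(2m-1+\lambda)}{(m-1+\lambda)(2m-3+\lambda)(2m-3+2\lambda)}\big[\widetilde Q_{m-1}-\widetilde Q_{m-2}\big]-\frac{(2m-1)(2m-2+\lambda)(2m-1+\lambda)}{2(m-1+\lambda)}\,\mu\,\widetilde Q_{m-1}(\mu).$$ Write $Q_m(\mu)=\sum_{i=0}^m(-1)^iA_{i,m}\mu^i$ and $\widetilde Q_m(\mu)=\sum_{i=0}^m(-1)^i\widetilde A_{i,m}\mu^i$, with $A_{i,m}=\widetilde A_{i,m}=0$ for $i>m$. *)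

(* Defs.v *)
From HB Require Import structures.
From mathcomp Require Import all_boot all_order all_algebra.
Set Implicit Arguments. Unset Strict Implicit. Unset Printing Implicit Defensive.
Import Order.TTheory GRing.Theory Num.Theory.
Local Open Scope ring_scope.

Section QDefs.
Variable R : realFieldType.
Variable l : R.

(* Q_m - Q_{m-1} = a m (Q_{m-1} - Q_{m-2}) - b m * mu * Q_{m-1}, m >= 2 *)
Definition Qa (m : nat) : R :=
  (m%:R * (2 * m%:R - 1) * (2 * m%:R + l)) /
  ((m%:R - 1 + l) * (2 * m%:R - 2 + l) * (2 * m%:R - 1 + 2 * l)).
Definition Qb (m : nat) : R :=
  (2 * m%:R * (2 * m%:R - 1 + l) * (2 * m%:R + l)) / (2 * m%:R - 1 + 2 * l).

Fixpoint Qpair (n : nat) : {poly R} * {poly R} :=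
  match n with
  | 0 => (1, 1 - (2 * (l + 1) * (l + 2) / (2 * l + 1)) *: 'X)
  | n'.+1 => let pq := Qpair n' in
             (pq.2, pq.2 + Qa n'.+2 *: (pq.2 - pq.1) - Qb n'.+2 *: ('X * pq.2))
  end.
Definition Q (m : nat) : {poly R} := (Qpair m).1.

Definition Qta (m : nat) : R :=
  ((m%:R - 1) * (2 * m%:R - 1) * (2 * m%:R - 1 + l)) /
  ((m%:R - 1 + l) * (2 * m%:R - 3 + l) * (2 * m%:R - 3 + 2 * l)).
Definition Qtb (m : nat) : R :=
  ((2 * m%:R - 1) * (2 * m%:R - 2 + l) * (2 * m%:R - 1 + l)) / (2 * (m%:R - 1 + l)).

Fixpoint Qtpair (n : nat) : {poly R} * {poly R} :=
  match n with
  | 0 => (1, 1 - ((l + 1) / 2) *: 'X)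
  | n'.+1 => let pq := Qtpair n' in
             (pq.2, pq.2 + Qta n'.+2 *: (pq.2 - pq.1) - Qtb n'.+2 *: ('X * pq.2))
  end.
Definition Qt (m : nat) : {poly R} := (Qtpair m).1.

(* Q_m(mu) = sum_i (-1)^i A_{i,m} mu^i *)
Definition A (i m : nat) : R := (-1) ^+ i * (Q m)`_i.
Definition At (i m : nat) : R := (-1) ^+ i * (Qt m)`_i.

Definition D2 (m : nat) : R := if (m <= 1)%N then 0 else A 2 m - A 2 m.-1.
Definition Dt2 (m : nat) : R := if (m <= 1)%N then 0 else At 2 m - At 2 m.-1.
End QDefs.

(* Main.v *)
Require Import Defs.
From HB Require Import structures.
From mathcomp Require Import all_boot all_order all_algebra.
From mathcomp Require Import ring lra.
Import Order.TTheory GRing.Theory Num.Theory.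
Local Open Scope ring_scope.

Ltac nz := repeat (apply/andP; split); apply/negP => /eqP ?; lra.

Section S.
Variable R : realFieldType.
Variable l : R.


Definition A1f (k : R) := k * (k + 1) * (k + l) * (k + 1 + l) / (2 * l + 1).
Definition Df (m : R) := (2 * (m - 1) * m * (m + l) * (m + l + 1) * (2 * m + l)
          * (m ^+ 2 + l * m - 2 / (2 * l + 3))) /
       ((2 * l + 1) * (2 * l + 5)).
Definition aF (m : R) := (m * (2 * m - 1) * (2 * m + l)) /
  ((m - 1 + l) * (2 * m - 2 + l) * (2 * m - 1 + 2 * l)).
Definition bF (m : R) := (2 * m * (2 * m - 1 + l) * (2 * m + l)) / (2 * m - 1 + 2 * l).

Definition At1f (k : R) := k * (k + l) * (k ^+ 2 + l * k - 1 / 2) / (2 * l + 1).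
Definition Dtf (m : R) := ((m - 1) * (2 * m - 1) * (m + l) * (2 * m - 1 + l)
          * (2 * m - 1 + 2 * l)
          * (m ^+ 2 + (l - 1) * m - (2 * l + 1) / 2 - 2 / (2 * l + 3))) /
       (2 * (2 * l + 1) * (2 * l + 5)).
Definition taF (m : R) := ((m - 1) * (2 * m - 1) * (2 * m - 1 + l)) /
  ((m - 1 + l) * (2 * m - 3 + l) * (2 * m - 3 + 2 * l)).
Definition tbF (m : R) := ((2 * m - 1) * (2 * m - 2 + l) * (2 * m - 1 + l)) / (2 * (m - 1 + l)).

Lemma E1 (hl : - (1 / 2) < l) (x : R) : 2 <= x -> A1f x = A1f (x-1) + aF x * (A1f (x-1) - A1f (x-2)) + bF x.
Proof. move=> hx; rewrite /A1f /aF /bF; field; nz. Qed.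
Lemma E2 (hl : - (1 / 2) < l) (x : R) : 2 <= x -> Df x = aF x * Df (x-1) + bF x * A1f (x-1).
Proof. move=> hx; rewrite /Df /A1f /aF /bF; field; nz. Qed.
Lemma Et1 (hl : - (1 / 2) < l) (x : R) : 2 <= x -> At1f x = At1f (x-1) + taF x * (At1f (x-1) - At1f (x-2)) + tbF x.
Proof. move=> hx; rewrite /At1f /taF /tbF; field; nz. Qed.
Lemma Et2 (hl : - (1 / 2) < l) (x : R) : 2 <= x -> Dtf x = taF x * Dtf (x-1) + tbF x * At1f (x-1).
Proof. move=> hx; rewrite /Dtf /At1f /taF /tbF; field; nz. Qed.


Lemma cast1 n : (n.+1%:R : R) = n.+2%:R - 1.
Proof. by rewrite -[n.+2]addn1 natrD addrK. Qed.
Lemma cast0 n : (n%:R : R) = n.+2%:R - 2.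
Proof. by rewrite -[n.+2]addn2 natrD addrK. Qed.
Lemma cast2 n : (2 : R) <= n.+2%:R.
Proof. by rewrite (ler_nat R 2 n.+2). Qed.

Lemma invQ (hl : - (1 / 2) < l) n :
  (Qpair l n).1`_0 = 1 /\ (Qpair l n).2`_0 = 1 /\
  (Qpair l n).1`_1 = - A1f n%:R /\ (Qpair l n).2`_1 = - A1f n.+1%:R /\
  (Qpair l n).2`_2 - (Qpair l n).1`_2 = Df n.+1%:R.
Proof.
elim: n => [|n [h0 [h0' [h1 [h1' h2]]]]].
  rewrite /= !coefB !coef1 !coefZ !coefX /= /A1f /Df.
  split; first by [].
  split; first by rewrite mulr0 subr0.
  split; first by rewrite !mul0r oppr0.
  split; last by rewrite mulr0 !subr0 subrr !mulr0 !mul0r.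
  rewrite mulr1 add0r; field; nz.
rewrite [Qpair l n.+1]/=.
rewrite !coefB !coefD !coefZ !coefB !coefXM /=.
split; first by [].
split; first by rewrite h0 h0' subrr mulr0 addr0 mulr0 subr0.
split; first by [].
split.
  rewrite h0' h1 h1' mulr1 (E1 hl _ (cast2 n)) -cast1 -cast0.
  rewrite /Qa /Qb /aF /bF; ring.
rewrite h2 h1' (E2 hl _ (cast2 n)) -cast1.
rewrite /Qa /Qb /aF /bF; ring.
Qed.
Lemma invQt (hl : - (1 / 2) < l) n :
  (Qtpair l n).1`_0 = 1 /\ (Qtpair l n).2`_0 = 1 /\
  (Qtpair l n).1`_1 = - At1f n%:R /\ (Qtpair l n).2`_1 = - At1f n.+1%:R /\
  (Qtpair l n).2`_2 - (Qtpair l n).1`_2 = Dtf n.+1%:R.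
Proof.
elim: n => [|n [h0 [h0' [h1 [h1' h2]]]]].
  rewrite /= !coefB !coef1 !coefZ !coefX /= /At1f /Dtf.
  split; first by [].
  split; first by rewrite mulr0 subr0.
  split; first by rewrite !mul0r oppr0.
  split; last by field; nz.
  field; nz.
rewrite [Qtpair l n.+1]/=.
rewrite !coefB !coefD !coefZ !coefB !coefXM /=.
split; first by [].
split; first by rewrite h0 h0' subrr mulr0 addr0 mulr0 subr0.
split; first by [].
split.
  rewrite h0' h1 h1' mulr1 (Et1 hl _ (cast2 n)) -cast1 -cast0.
  rewrite /Qta /Qtb /taF /tbF; ring.
rewrite h2 h1' (Et2 hl _ (cast2 n)) -cast1.
rewrite /Qta /Qtb /taF /tbF; ring.
Qed.
Lemma D2E (hl : - (1 / 2) < l) m : (1 <= m)%N -> D2 l m = Df m%:R.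
Proof.
case: m => [//|k] _; rewrite /D2.
case: k => [|k].
  by rewrite /= /Df subrr !mulr0 !mul0r.
rewrite /= /A /Q sqrrN expr1n !mul1r.
have [_ [_ [_ [_ h]]]] := invQ hl k.+1.
by rewrite -h.
Qed.
Lemma Dt2E (hl : - (1 / 2) < l) m : (1 <= m)%N -> Dt2 l m = Dtf m%:R.
Proof.
case: m => [//|k] _; rewrite /Dt2.
case: k => [|k].
  by rewrite /= /Dtf subrr !mul0r.
rewrite /= /At /Qt sqrrN expr1n !mul1r.
have [_ [_ [_ [_ h]]]] := invQt hl k.+1.
by rewrite -h.
Qed.
End S.
Theorem lemma3p3 (R : realFieldType) (l : R) (hl : - (1 / 2) < l) :
  (* (i) *)
  (forall m : nat, (2 <= m)%N ->
     D2 l m =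
       (m%:R * (2 * m%:R - 1) * (2 * m%:R + l)) /
       ((m%:R - 1 + l) * (2 * m%:R - 2 + l) * (2 * m%:R - 1 + 2 * l)) * D2 l m.-1
     + (2 * (m%:R - 1) * m%:R ^+ 2 * (m%:R - 1 + l) * (m%:R + l)
          * (2 * m%:R - 1 + l) * (2 * m%:R + l)) /
       ((2 * l + 1) * (2 * m%:R - 1 + 2 * l))) /\
  (forall m : nat, (1 <= m)%N ->
     D2 l m =
       (2 * (m%:R - 1) * m%:R * (m%:R + l) * (m%:R + l + 1) * (2 * m%:R + l)
          * (m%:R ^+ 2 + l * m%:R - 2 / (2 * l + 3))) /
       ((2 * l + 1) * (2 * l + 5))) /\
  (* (ii) *)
  (forall m : nat, (2 <= m)%N ->
     Dt2 l m =
       ((m%:R - 1) * (2 * m%:R - 1) * (2 * m%:R - 1 + l)) /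
       ((m%:R - 1 + l) * (2 * m%:R - 3 + l) * (2 * m%:R - 3 + 2 * l)) * Dt2 l m.-1
     + ((m%:R - 1) * (2 * m%:R - 1) * (2 * m%:R - 2 + l) * (2 * m%:R - 1 + l)
          * (m%:R ^+ 2 + (l - 2) * m%:R - l + 1 / 2)) /
       (2 * (2 * l + 1))) /\
  (forall m : nat, (1 <= m)%N ->
     Dt2 l m =
       ((m%:R - 1) * (2 * m%:R - 1) * (m%:R + l) * (2 * m%:R - 1 + l)
          * (2 * m%:R - 1 + 2 * l)
          * (m%:R ^+ 2 + (l - 1) * m%:R - (2 * l + 1) / 2 - 2 / (2 * l + 3))) /
       (2 * (2 * l + 1) * (2 * l + 5))).
Proof.
split.
  case=> [//|[//|k]] _.
  rewrite (D2E _ _ hl) // (D2E _ _ hl) // [k.+2.-1]/= (cast1 R k).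
  have := cast2 R k; move: (k.+2%:R) => x hx.
  rewrite /Df; field; nz.
split.
  by move=> m hm; rewrite (D2E _ _ hl).
split.
  case=> [//|[//|k]] _.
  rewrite (Dt2E _ _ hl) // (Dt2E _ _ hl) // [k.+2.-1]/= (cast1 R k).
  have := cast2 R k; move: (k.+2%:R) => x hx.
  rewrite /Dtf; field; nz.
by move=> m hm; rewrite (Dt2E _ _ hl).
Qed.
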